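(* Let $G$ be a graph and let $C_1,C_2$ be two different simple cycles in $G$ that are not edge-disjoint (i.e. $E(C_1)\cap E(C_2)\neq\emptyset$). If $G$ does not contain any removable cycle of length at most $|C_1|+|C_2|$, then $G[V(C_1)\cup V(C_2)]$ is isomorphic to a complete graph.
   Context: A simple cycle in a graph $G$ is a sequence $(v_1,\dots,v_k)$ of $k>2$ distinct vertices with $\{v_i,v_{i+1}\}\in E(G)$ for $1\le i<k$ and $\{v_k,v_1\}\in E(G)$; $V(C)$ and $E(C)$ are its vertex and edge sets, and its length $|C|$ is $|V(C)|$. Two cycles are different if they are not the same cycle (their edge sets differ). $G[U]$ is the induced subgraph on $U$. A simple cycle $C$ in $G$ is removable if $G[V(C)]$ is neither isomorphic to a complete graph nor to a cycle graph of odd length. *)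

(* Defs.v *)
From mathcomp Require Import all_boot.
Set Implicit Arguments. Unset Strict Implicit. Unset Printing Implicit Defensive.

Section Graphs.
Variable T : finType.
Variable e : rel T.

Definition simple_graph : Prop := symmetric e /\ irreflexive e.

(* A simple cycle (v_1,...,v_k): k > 2 distinct vertices, consecutive ones
   adjacent, and v_k adjacent to v_1.  [cycle e c] is exactly
   path e v1 [:: v2; ...; vk; v1]. *)
Definition simple_cycle (c : seq T) : bool :=
  [&& 2 < size c, uniq c & cycle e c].

Definition cverts (c : seq T) : {set T} := [set x | x \in c].

Definition cedges (c : seq T) : {set {set T}} :=
  [set [set x; next c x] | x in c].

Definition clen (c : seq T) : nat := #|cverts c|.

(* G[U] is isomorphic to a complete graph: any two distinct vertices of U
   are adjacent. *)
Definition induced_complete (U : {set T}) : Prop :=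
  forall x y, x \in U -> y \in U -> x != y -> e x y.

(* G[U] is isomorphic to a cycle graph C_n of odd length n (n >= 3):
   there is a cyclic enumeration s of U (an explicit bijection with Z_n)
   such that two vertices of U are adjacent in G iff they are cyclically
   consecutive in s. *)
Definition induced_odd_cycle (U : {set T}) : Prop :=
  exists s : seq T,
    [/\ uniq s, s =i U, 2 < size s, odd (size s) &
        forall x y, x \in s -> y \in s ->
          e x y = (y == next s x) || (x == next s y)].

Definition removable (c : seq T) : Prop :=
  simple_cycle c /\
  ~ induced_complete (cverts c) /\ ~ induced_odd_cycle (cverts c).

End Graphs.

(* Main.v *)
Require Import Defs.
From mathcomp Require Import all_boot.
From Stdlib Require Import Classical.
From mathcomp Require Import zify.
Set Implicit Arguments. Unset Strict Implicit. Unset Printing Implicit Defensive.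

Section Aux.
Variable T : finType.
Variable e : rel T.
Hypothesis esym : symmetric e.
Hypothesis eirr : irreflexive e.

Definition deg2 (c : seq T) : Prop :=
  forall a b1 b2 b3, a \in c -> b1 \in c -> b2 \in c -> b3 \in c ->
    b1 != b2 -> b1 != b3 -> b2 != b3 -> e a b1 -> e a b2 -> e a b3 -> False.

Lemma deg2_eqmem (c c' : seq T) : c =i c' -> deg2 c -> deg2 c'.
Proof.
move=> eq d a b1 b2 b3; rewrite -!eq; exact: d.
Qed.

Lemma clen_uniq (c : seq T) : uniq c -> clen c = size c.
Proof. move=> u; rewrite /clen /cverts cardsE; exact/card_uniqP. Qed.

Lemma nonrem L (c : seq T) : (forall c, removable e c -> L < clen c) ->
  simple_cycle e c -> clen c <= L -> ~ induced_complete e (cverts c) ->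
  odd (size c) /\ deg2 c.
Proof.
move=> H sc hl nc.
have: induced_odd_cycle e (cverts c).
  apply: NNPP => no; have := H c (conj sc (conj nc no)); by rewrite ltnNge hl.
case=> s [us ss s3 os hs].
case/and3P: sc => c3 uc cc.
have mem : forall y, y \in c -> y \in s by move=> y; rewrite ss /cverts inE.
have szs : size s = size c.
  rewrite -(card_uniqP us) -(card_uniqP uc); apply: eq_card => x.
  by rewrite ss /cverts inE.
split; first by rewrite -szs.
move=> a b1 b2 b3 ha h1 h2 h3 n12 n13 n23 e1 e2 e3.
have nb : forall b, b \in c -> e a b -> b = next s a \/ b = prev s a.
  move=> b hb; rewrite hs ?mem // => /orP[/eqP->|/eqP->]; first by left.
  by right; rewrite prev_next.
case: (nb _ h1 e1) => E1; case: (nb _ h2 e2) => E2; case: (nb _ h3 e3) => E3;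
  subst; by rewrite ?eqxx in n12 n13 n23.
Qed.

Lemma size3_complete (c : seq T) : simple_cycle e c -> size c = 3 ->
  induced_complete e (cverts c).
Proof.
move=> /and3P[_ _ cc]; case: c cc => [|a [|b [|d [|? ?]]]] //= cc _.
move: cc; rewrite !andbT => /and3P[eab ebd eda] x y; rewrite /cverts !inE.
by move=> /or3P[]/eqP-> /or3P[]/eqP->; rewrite ?eqxx // => _; rewrite // esym.
Qed.

Lemma no_chord (s : seq T) a b d r : uniq s -> cycle e s -> deg2 s -> 3 < size s ->
  s = a :: b :: d :: r -> ~~ e a d.
Proof.
move=> us cs dg sz E; subst s; case: r us cs dg sz => // w r us cs dg _.
apply/negP => ead.
have hl : e a (last w r).
  move: cs; rewrite /= rcons_path => /and5P[_ _ _ _]; by rewrite esym.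
have eab : e a b by move: cs => /= /andP[].
move: us => /= /and4P[_ nb nd _].
have lin : last w r \in w :: r by exact: mem_last.
have h1 : b != last w r by apply: contraNneq nb => ->; rewrite inE lin orbT.
have h2 : d != last w r by apply: contraNneq nd => ->.
have h3 : b != d by apply: contraNneq nb => ->; rewrite inE eqxx.
apply: (dg a b d (last w r)) => //; rewrite ?inE ?eqxx ?orbT //.
by move: lin; rewrite inE => /orP[->|->]; rewrite ?orbT.
Qed.

End Aux.

Section Aux2.
Variable T : finType.
Variable e : rel T.
Hypothesis esym : symmetric e.
Hypothesis eirr : irreflexive e.

Lemma np_diff (s : seq T) a : uniq s -> 2 < size s -> a \in s -> next s a != prev s a.
Proof.
move=> us sz ha; have [i t E] := rot_to ha.
apply/eqP => Enp.
have := next_prev us a; rewrite -Enp.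
rewrite -!(next_rot i us) E.
have : size (a :: t) > 2 by rewrite -E size_rot.
have : uniq (a :: t) by rewrite -E rot_uniq.
case: t {E} => [|b [|d r]] //= /andP[]; rewrite !inE !negb_or => /and3P[nab nad _] /andP[/andP[nbd _] _] _.
rewrite eqxx eq_sym (negbTE nab) eqxx => E; by rewrite E eqxx in nad.
Qed.

Lemma caseA (c1 c2 : seq T) : simple_cycle e c1 -> simple_cycle e c2 -> deg2 e c1 ->
  {subset c2 <= c1} -> cedges c1 = cedges c2.
Proof.
move=> /and3P[s1 u1 cy1] /and3P[s2 u2 cy2] dg sub.
have str : forall a, a \in c2 ->
   (next c2 a = next c1 a /\ prev c2 a = prev c1 a) \/
   (next c2 a = prev c1 a /\ prev c2 a = next c1 a).
  move=> a a2; have a1 := sub a a2.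
  have eN1 : e a (next c1 a) := next_cycle cy1 a1.
  have eP1 : e a (prev c1 a) by rewrite esym; exact: prev_cycle cy1 a1.
  have eN2 : e a (next c2 a) := next_cycle cy2 a2.
  have eP2 : e a (prev c2 a) by rewrite esym; exact: prev_cycle cy2 a2.
  have d1 := np_diff u1 s1 a1; have d2 := np_diff u2 s2 a2.
  have mN2 : next c2 a \in c1 by apply: sub; rewrite mem_next.
  have mP2 : prev c2 a \in c1 by apply: sub; rewrite mem_prev.
  have in2 : forall b, b \in c1 -> e a b -> b = next c1 a \/ b = prev c1 a.
    move=> b hb eb; case: (eqVneq b (next c1 a)) => [->|nN]; first by left.
    case: (eqVneq b (prev c1 a)) => [->|nP]; first by right.
    exfalso; apply: (dg a (next c1 a) (prev c1 a) b) => //;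
      by rewrite ?mem_next ?mem_prev // eq_sym.
  case: (in2 _ mN2 eN2) => HN; case: (in2 _ mP2 eP2) => HP.
  - by rewrite HN HP eqxx in d2.
  - by left.
  - by right.
  - by rewrite HN HP eqxx in d2.
have cl : closed (frel (next c1)) c2.
  move=> x y /eqP <-.
  case: (boolP (x \in c1)) => x1; last by rewrite next_nth (negbTE x1).
  apply/idP/idP => h.
  - by case: (str x h) => [[E _]|[_ E]]; rewrite -E ?mem_next ?mem_prev.
  - have px := prev_next u1 x.
    by case: (str _ h) => [[_ E]|[E _]]; rewrite -px -?E ?mem_next ?mem_prev.
have sub21 : {subset c1 <= c2}.
  move=> y y1; case: c2 s2 u2 cy2 sub str cl => [|u t] // _ _ _ sub str cl.
  have uin : u \in u :: t by rewrite inE eqxx.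
  have := fconnect_cycle (cycle_next u1) (sub u uin) y; rewrite y1 => con.
  by rewrite -(closed_connect cl con).
apply/eqP; rewrite eqEsubset; apply/andP; split; apply/subsetP => A /imsetP[a ha ->].
- have a2 := sub21 a ha.
  case: (str a a2) => [[E _]|[_ E]]; rewrite -E; first by apply: imset_f.
  have -> : [set a; prev c2 a] = [set prev c2 a; next c2 (prev c2 a)]
    by rewrite next_prev // setUC.
  by apply: imset_f; rewrite mem_prev.
- have a1 := sub a ha.
  case: (str a ha) => [[E _]|[E _]]; rewrite E; first by apply: imset_f.
  have -> : [set a; prev c1 a] = [set prev c1 a; next c1 (prev c1 a)]
    by rewrite next_prev // setUC.
  by apply: imset_f; rewrite mem_prev.
Qed.

Lemma transition (P : pred T) u t : P u -> has (predC P) t ->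
  exists p x y t', u :: t = p ++ x :: y :: t' /\ P x /\ ~~ P y.
Proof.
elim: t u => [|a t IH] u //= Pu /orP[na|ht].
- by exists [::], u, a, t.
- case: (boolP (P a)) => Pa.
  + have [p [x [y [t' [E [Px Py]]]]]] := IH a Pa ht.
    by exists (u :: p), x, y, t'; rewrite E.
  + by exists [::], u, a, t.
Qed.

Lemma first_split (P : pred T) s : has P s ->
  exists q1 z q2, s = q1 ++ z :: q2 /\ P z /\ (forall w, w \in q1 -> ~~ P w).
Proof.
elim: s => [|a s IH] //= /orP[Pa|hs].
- by exists [::], a, s.
- case: (boolP (P a)) => Pa; first by exists [::], a, s.
  have [q1 [z [q2 [E [Pz hq]]]]] := IH hs.
  exists (a :: q1), z, q2; rewrite E; split => //; split => // w.
  by rewrite inE => /orP[/eqP->|]; last exact: hq.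
Qed.

Lemma comp_rev x p1 z (p2 : seq T) :
  rev (x :: p1 ++ z :: p2) = rot 1 (x :: rev p2 ++ z :: rev p1).
Proof. by rewrite rot1_cons rev_cons rev_cat rev_cons cat_rcons. Qed.

Lemma comp_cycle x p1 z (p2 : seq T) : cycle e (x :: p1 ++ z :: p2) ->
  cycle e (x :: rev p2 ++ z :: rev p1).
Proof.
move=> cy; rewrite -(rot_cycle 1) -comp_rev rev_cycle.
have sym2 : (fun a b => e b a) =2 e by move=> a b; rewrite esym.
by move: cy => /=; rewrite (eq_path sym2).
Qed.

Lemma comp_uniq x p1 z (p2 : seq T) : uniq (x :: p1 ++ z :: p2) ->
  uniq (x :: rev p2 ++ z :: rev p1).
Proof. by move=> u; rewrite -(rot_uniq 1) -comp_rev rev_uniq. Qed.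

Lemma comp_mem x p1 z (p2 : seq T) :
  (x :: rev p2 ++ z :: rev p1) =i (x :: p1 ++ z :: p2).
Proof. by move=> w; rewrite -(mem_rot 1) -comp_rev mem_rev. Qed.

Lemma comp_size x p1 z (p2 : seq T) :
  size (x :: rev p2 ++ z :: rev p1) = size (x :: p1 ++ z :: p2).
Proof. by rewrite -(size_rot 1) -comp_rev size_rev. Qed.

Lemma ear_cycle x p1 z p2 y (q1 : seq T) :
  cycle e (x :: p1 ++ z :: p2) -> uniq (x :: p1 ++ z :: p2) ->
  uniq (y :: q1) -> path e x (rcons (y :: q1) z) ->
  (forall w, w \in y :: q1 -> w \notin x :: p1 ++ z :: p2) ->
  simple_cycle e ((y :: q1) ++ z :: rcons p2 x).
Proof.
move=> cy us uq hp hq.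
have R : rot (size (x :: p1)) ((x :: p1) ++ z :: p2) = z :: p2 ++ x :: p1
  := rot_size_cat _ _.
have cyR : cycle e (z :: p2 ++ x :: p1) by rewrite -R rot_cycle.
have uR : uniq (z :: p2 ++ x :: p1) by rewrite -R rot_uniq.
have EW : z :: p2 ++ x :: p1 = (z :: rcons p2 x) ++ p1 by rewrite -cat_rcons.
have pW : path e z (rcons p2 x).
  move: cyR => /=; rewrite rcons_cat cat_path rcons_path => /and3P[p2p /= /andP[lx _] _].
  by rewrite rcons_path p2p lx.
have uW : uniq (z :: rcons p2 x) by move: uR; rewrite EW cat_uniq => /andP[].
have sub : {subset z :: rcons p2 x <= x :: p1 ++ z :: p2}.
  move=> w hw; rewrite -(mem_rot (size (x :: p1))).
  by rewrite [rot _ _]R EW mem_cat hw.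
apply/and3P; split.
- by rewrite size_cat /= size_rcons addSn !addnS.
- rewrite cat_uniq uq uW andbT; apply/hasPn => w /sub ws.
  by apply/negP => wq; move: (hq w wq); rewrite ws.
- move: hp => /= /andP[exy]; rewrite rcons_path => /andP[pq lz].
  rewrite rcons_cat cat_path pq /= lz /= rcons_path pW last_rcons.
  by rewrite exy.
Qed.

Lemma ear_final L x p1 z p2 y (q1 : seq T) :
  (forall c, removable e c -> L < clen c) ->
  cycle e (x :: p1 ++ z :: p2) -> uniq (x :: p1 ++ z :: p2) ->
  deg2 e (x :: p1 ++ z :: p2) -> 4 < size (x :: p1 ++ z :: p2) ->
  uniq (y :: q1) -> path e x (rcons (y :: q1) z) ->
  (forall w, w \in y :: q1 -> w \notin x :: p1 ++ z :: p2) ->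
  size (y :: q1) + size (x :: p1 ++ z :: p2) <= L ->
  ~~ odd (size (y :: q1) + size p2) -> False.
Proof.
move=> H cy us dg sz5 uq hp hq hL hpar.
have szS : size (x :: p1 ++ z :: p2) = (size p1 + size p2).+2
  by rewrite /= size_cat /=; lia.
have scD := ear_cycle cy us uq hp hq.
have uD : uniq ((y :: q1) ++ z :: rcons p2 x) by case/and3P: scD.
have szD : size ((y :: q1) ++ z :: rcons p2 x) = size (y :: q1) + size p2 + 2
  by rewrite size_cat /= size_rcons; lia.
have lD : clen ((y :: q1) ++ z :: rcons p2 x) <= L
  by rewrite clen_uniq // szD; lia.
have cD : induced_complete e (cverts ((y :: q1) ++ z :: rcons p2 x)).
  apply: NNPP => nc; have [oD _] := nonrem H scD lD nc; move: oD.
  by move: hpar; rewrite szD addn2 /= negbK => ->.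
have xS : x \in x :: p1 ++ z :: p2 by rewrite inE eqxx.
have zS : z \in x :: p1 ++ z :: p2 by rewrite inE mem_cat inE eqxx !orbT.
have nxz : x != z by move: us => /= /andP[+ _]; apply: contraNneq => <-;
  rewrite mem_cat inE eqxx orbT.
case E2: p2 => [|a p2r].
- (* the ear closes along a single edge of C1 *)
  rewrite E2 /= addn0 in hpar.
  case Eq: q1 => [|y2 q1']; first by rewrite Eq in hpar.
  subst q1.
  have y2S : y2 \notin x :: p1 ++ z :: p2 by apply: hq; rewrite !inE eqxx orbT.
  have yS : y \notin x :: p1 ++ z :: p2 by apply: hq; rewrite !inE eqxx.
  have exy2 : e x y2.
    apply: cD; rewrite /cverts ?in_set.
    - by rewrite mem_cat !inE ?mem_rcons ?inE eqxx !orbT.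
    - by rewrite mem_cat !inE eqxx !orbT.
    - by apply: contraNneq y2S => <-.
  have cy' := comp_cycle cy; have us' := comp_uniq us.
  have hq' : forall w, w \in y :: y2 :: q1' -> w \notin x :: rev p2 ++ z :: rev p1
    by move=> w hw; rewrite comp_mem; apply: hq.
  have scD' := ear_cycle cy' us' uq hp hq'.
  have uD' : uniq ((y :: y2 :: q1') ++ z :: rcons (rev p1) x) by case/and3P: scD'.
  have lD' : clen ((y :: y2 :: q1') ++ z :: rcons (rev p1) x) <= L.
    by rewrite clen_uniq // size_cat /= size_rcons size_rev; move: hL; rewrite szS /= => h; apply: leq_trans h; rewrite leq_add2l !ltnS leq_addr.
  have exz : e x z by move: cy'; rewrite E2 /= => /andP[].
  have ncD' : ~ induced_complete e (cverts ((y :: y2 :: q1') ++ z :: rcons (rev p1) x)).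
    have : 2 < size (rev p1) by rewrite size_rev; move: sz5; rewrite szS E2 /=; rewrite addn0.
    case Er: (rev p1) => [|a' [|b' r']] // _.
    have R : rot 1 (x :: rev p2 ++ z :: rev p1) = z :: a' :: b' :: rcons r' x
      by rewrite rot1_cons E2 Er.
    have uR : uniq (rot 1 (x :: rev p2 ++ z :: rev p1)) by rewrite rot_uniq.
    have cR : cycle e (rot 1 (x :: rev p2 ++ z :: rev p1)) by rewrite rot_cycle.
    have dgR : deg2 e (rot 1 (x :: rev p2 ++ z :: rev p1)).
      apply: (deg2_eqmem (c := x :: p1 ++ z :: p2)) dg => w.
      by rewrite mem_rot comp_mem.
    have szR : 3 < size (rot 1 (x :: rev p2 ++ z :: rev p1)).
      by rewrite size_rot comp_size; apply: ltnW.
    have nzb := no_chord esym uR cR dgR szR R.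
    move=> cD'; apply: (negP nzb); apply: cD'; rewrite /cverts ?in_set.
    - by rewrite mem_cat !inE eqxx !orbT.
    - by rewrite mem_cat !inE ?mem_rcons ?inE eqxx !orbT.
    - by move: uR; rewrite R /= !inE negb_or => /andP[/andP[_ +] _]; rewrite negb_or => /andP[].
  have [_ dg'] := nonrem H scD' lD' ncD'.
  have exy : e x y by move: hp => /= /andP[].
  apply: (dg' x y y2 z) => //.
  - by rewrite mem_cat !inE ?mem_rcons ?inE eqxx !orbT.
  - by rewrite mem_cat !inE eqxx ?orbT.
  - by rewrite mem_cat !inE eqxx ?orbT.
  - by rewrite mem_cat !inE eqxx ?orbT.
  - by move: uq => /= /andP[]; rewrite inE negb_or => /andP[].
  - by apply: contraNneq yS => ->.
  - by apply: contraNneq y2S => ->.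
- subst p2.
  have R : rot (size (x :: p1)) ((x :: p1) ++ z :: a :: p2r) = z :: a :: p2r ++ x :: p1
    := rot_size_cat _ _.
  have uR : uniq (rot (size (x :: p1)) ((x :: p1) ++ z :: a :: p2r)) by rewrite rot_uniq.
  have cR : cycle e (rot (size (x :: p1)) ((x :: p1) ++ z :: a :: p2r)) by rewrite rot_cycle.
  have dgR : deg2 e (rot (size (x :: p1)) ((x :: p1) ++ z :: a :: p2r)).
    by apply: (deg2_eqmem (c := x :: p1 ++ z :: a :: p2r)) dg => w; rewrite mem_rot.
  have szR : 3 < size (rot (size (x :: p1)) ((x :: p1) ++ z :: a :: p2r)).
    by rewrite size_rot; apply: ltnW.
  case: p2r R uR cR dgR szR cD uD hpar szD lD scD hq us cy dg sz5 hL szS zS xS =>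
    [|b p2rr] R uR cR dgR szR cD uD hpar szD lD scD hq us cy dg sz5 hL szS zS xS.
  + have nzx := no_chord esym uR cR dgR szR R.
    apply: (negP nzx); apply: cD; rewrite /cverts ?in_set.
    * by rewrite mem_cat !inE eqxx !orbT.
    * by rewrite mem_cat !inE eqxx !orbT.
    * by rewrite eq_sym.
  + have nzb := no_chord esym uR cR dgR szR R.
    apply: (negP nzb); apply: cD; rewrite /cverts ?in_set.
    * by rewrite mem_cat !inE eqxx !orbT.
    * by rewrite mem_cat !inE eqxx !orbT.
    * by move: uR; rewrite R /= !inE !negb_or => /andP[/and3P[_ + _] _].
Qed.


End Aux2.

Section Aux3.
Variable T : finType.
Variable e : rel T.
Hypothesis esym : symmetric e.

Lemma key L (c1 c2 : seq T) u v :
  (forall c, removable e c -> L < clen c) ->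
  simple_cycle e c1 -> simple_cycle e c2 -> size c1 + size c2 <= L ->
  cedges c1 != cedges c2 -> u != v -> u \in c1 -> v \in c1 -> u \in c2 -> v \in c2 ->
  ~ induced_complete e (cverts c1) -> False.
Proof.
move=> H sc1 sc2 hL ne nuv u1 v1 u2 v2 nc.
have /and3P[s1 uc1 cy1] := sc1; have /and3P[s2 uc2 cy2] := sc2.
have lc1 : clen c1 <= L by rewrite clen_uniq //; apply: leq_trans hL; apply: leq_addr.
have [o1 dg1] := nonrem H sc1 lc1 nc.
have n3 : size c1 != 3 by apply/eqP => h; apply: nc; exact (size3_complete esym sc1 h).
have sz5 : 4 < size c1 by move: s1 n3 o1; case: (size c1) => [|[|[|[|[|n]]]]].
case: (boolP (all (fun w => w \in c1) c2)) => hall.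
  by rewrite (caseA esym sc1 sc2 dg1 (fun w hw => allP hall w hw)) eqxx in ne.
move/allPn: hall => [w w2 nw1].
have [i t Et] := rot_to u2.
have ht : has (predC (fun w => w \in c1)) t.
  apply/hasP; exists w => /=; last by [].
  have : w \in u :: t by rewrite -Et mem_rot.
  by rewrite inE => /orP[/eqP E|//]; rewrite E u1 in nw1.
have [p [x [y [t' [Ep [Px Py]]]]]] := transition u1 ht.
have Ec2' : rot (size p) (rot i c2) = x :: y :: (t' ++ p)
  by rewrite Et Ep rot_size_cat.
have cy2' : cycle e (x :: y :: (t' ++ p)) by rewrite -Ec2' !rot_cycle.
have uc2' : uniq (x :: y :: (t' ++ p)) by rewrite -Ec2' !rot_uniq.
have mc2' : (x :: y :: (t' ++ p)) =i c2 by move=> w'; rewrite -Ec2' !mem_rot.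
have szc2' : size (x :: y :: (t' ++ p)) = size c2 by rewrite -Ec2' !size_rot.
have [z0 [z01 [z02 nz0x]]] : exists z0, [/\ z0 \in c1, z0 \in c2 & z0 != x].
  case: (eqVneq u x) => [Eux|nux]; last by exists u.
  by exists v; split => //; rewrite -Eux eq_sym.
have hz : has (fun w => w \in c1) (y :: t' ++ p).
  apply/hasP; exists z0 => //.
  by move: z02; rewrite -mc2' inE (negbTE nz0x).
have [q1 [z [q2 [Eq [Pz hq1]]]]] := first_split hz.
case: q1 Eq hq1 => [|y1 q1'] /=.
  by case=> Eyz _ _; move: Py Pz; rewrite Eyz /= => /negP.
case=> <- Eq hq1.
rewrite Eq in cy2' uc2' szc2'.
have uq : uniq (y :: q1').
  move: uc2' => /= /and3P[_ yn]; rewrite cat_uniq => /andP[uq' _].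
  by rewrite uq' andbT; apply: contra yn; rewrite mem_cat => ->.
have hp : path e x (rcons (y :: q1') z).
  move: cy2'; rewrite /= rcons_cat cat_path => /and3P[exy pq] /= /andP[lz _].
  by rewrite exy rcons_path pq lz.
have nxz : x != z.
  move: uc2' => /= /andP[+ _]; apply: contraNneq => <-.
  by rewrite inE mem_cat inE eqxx !orbT.
have [i1 p1 p2 _ _ E1] := rot_to_arc uc1 Px Pz nxz.
have cS : cycle e (x :: p1 ++ z :: p2) by rewrite -E1 rot_cycle.
have uS : uniq (x :: p1 ++ z :: p2) by rewrite -E1 rot_uniq.
have mS : c1 =i (x :: p1 ++ z :: p2) by move=> w'; rewrite -E1 mem_rot.
have dS : deg2 e (x :: p1 ++ z :: p2) := deg2_eqmem mS dg1.
have szS : size (x :: p1 ++ z :: p2) = size c1 by rewrite -E1 size_rot.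
have hq : forall w, w \in y :: q1' -> w \notin x :: p1 ++ z :: p2.
  by move=> w' hw; rewrite -mS; have := hq1 _ hw.
have hL' : size (y :: q1') + size (x :: p1 ++ z :: p2) <= L.
  rewrite szS; move: szc2' hL; rewrite /= size_cat /=; clear; lia.
have sz5' : 4 < size (x :: p1 ++ z :: p2) by rewrite szS.
case: (boolP (odd (size (y :: q1') + size p2))) => hpar; last first.
  exact (ear_final esym H cS uS dS sz5' uq hp hq hL' hpar).
have cS' := comp_cycle esym cS; have uS' := comp_uniq uS.
have dS' : deg2 e (x :: rev p2 ++ z :: rev p1)
  by apply: deg2_eqmem dS => w'; rewrite comp_mem.
have szS' := comp_size x p1 z p2.
apply: (ear_final esym H cS' uS' dS' _ uq hp) => //.
- by rewrite szS'.
- by move=> w' hw; rewrite comp_mem; apply: hq.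
- by rewrite szS'.
- move: hpar o1; rewrite -szS /= size_cat /= size_rev !oddD /=.
  by case: (odd (size q1')); case: (odd (size p1)); case: (odd (size p2)).
Qed.

End Aux3.

Theorem lemma5p1 (T : finType) (e : rel T) (c1 c2 : seq T) :
  simple_graph e ->
  simple_cycle e c1 -> simple_cycle e c2 ->
  cedges c1 != cedges c2 ->
  cedges c1 :&: cedges c2 != set0 ->
  (forall c : seq T, removable e c -> clen c1 + clen c2 < clen c) ->
  induced_complete e (cverts c1 :|: cverts c2).
Proof.
move=> [esym eirr] sc1 sc2 ne ni H.
have /and3P[s1 uc1 cy1] := sc1; have /and3P[s2 uc2 cy2] := sc2.
case/set0Pn: ni => A /setIP[A1 A2].
case/imsetP: A1 => a a1 EA; case/imsetP: A2 => b b2 EB.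
have aA : a \in A by rewrite EA !inE eqxx.
have vA : next c1 a \in A by rewrite EA !inE eqxx orbT.
have a2 : a \in c2.
  by move: aA; rewrite EB !inE => /orP[]/eqP->; rewrite ?mem_next.
have v2 : next c1 a \in c2.
  by move: vA; rewrite EB !inE => /orP[]/eqP->; rewrite ?mem_next.
have v1 : next c1 a \in c1 by rewrite mem_next.
have nuv : a != next c1 a.
  by apply/eqP => E; have := next_cycle cy1 a1; rewrite -E eirr.
have hL : size c1 + size c2 <= clen c1 + clen c2 by rewrite !clen_uniq.
have C1 : induced_complete e (cverts c1).
  apply: NNPP => nc; exact: (key esym H sc1 sc2 hL ne nuv a1 v1 a2 v2 nc).
have C2 : induced_complete e (cverts c2).
  apply: NNPP => nc.
  apply: (key esym H sc2 sc1 _ _ nuv a2 v2 a1 v1 nc).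
  - by rewrite addnC.
  - by rewrite eq_sym.
have inC : forall (c : seq T) w, (w \in cverts c) = (w \in c) by move=> c w; rewrite /cverts inE.
have cross : forall x y, x \in c1 -> x \notin c2 -> y \in c2 -> y \notin c1 -> e x y.
  move=> x y x1 x2 y2 y1.
  have nxa : x != a by apply: contraNneq x2 => ->.
  have nxv : x != next c1 a by apply: contraNneq x2 => ->.
  have nya : y != a by apply: contraNneq y1 => ->.
  have nyv : y != next c1 a by apply: contraNneq y1 => ->.
  have nxy : x != y by apply: contraNneq y1 => <-.
  have sc : simple_cycle e [:: x; a; y; next c1 a].
    apply/and3P; split => //.
    - by rewrite /= !inE !negb_or nxa nxy nxv /= eq_sym nya nuv nyv.
    - rewrite /= andbT.
      rewrite (C1 x a) ?inC // (C2 a y) ?inC 1?eq_sym // (C2 y (next c1 a)) ?inC //.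
      by rewrite (C1 (next c1 a) x) ?inC // eq_sym.
  have ls : clen [:: x; a; y; next c1 a] <= clen c1 + clen c2.
    have us : uniq [:: x; a; y; next c1 a] by case/and3P: sc.
    by rewrite !clen_uniq //=; apply: leq_trans (leq_add s1 s2).
  case: (classic (induced_complete e (cverts [:: x; a; y; next c1 a]))) => [cs|ncs].
    by apply: cs; rewrite ?inC ?inE ?eqxx ?orbT.
  by have [] := nonrem H sc ls ncs.
move=> x y; rewrite !in_setU !inC => hx hy nxy.
case: (boolP (x \in c1)) => x1; case: (boolP (y \in c1)) => y1.
- by apply: C1; rewrite ?inC.
- have y2 : y \in c2 by case/orP: hy => //; rewrite (negbTE y1).
  case: (boolP (x \in c2)) => x2; first by apply: C2; rewrite ?inC.
  exact: cross.
- have x2 : x \in c2 by case/orP: hx => //; rewrite (negbTE x1).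
  case: (boolP (y \in c2)) => y2; first by apply: C2; rewrite ?inC.
  by rewrite esym; apply: cross.
- have x2 : x \in c2 by case/orP: hx => //; rewrite (negbTE x1).
  have y2 : y \in c2 by case/orP: hy => //; rewrite (negbTE y1).
  by apply: C2; rewrite ?inC.
Qed.
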